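(* Let $N$ be a simply connected nilpotent Lie group with Lie algebra $\mathcal{N}$, and let $\mathfrak{z}$ be the center of $\mathcal{N}$. Let $F$ be an abstract group automorphism of $N$ and $f=\exp^{-1}\circ F\circ\exp$. Then $F$ is a central automorphism (i.e. $x^{-1}F(x)$ lies in the center $Z$ of $N$ for all $x\in N$) if and only if $f(x)-x\in\mathfrak{z}$ for all $x\in\mathcal{N}$.
   Context: $\exp:\mathcal{N}\to N$ is a diffeomorphism with $\exp(\mathfrak{z})=Z$; the map $f$ is a Lie ring automorphism (additive, bracket-preserving, bijective). *)

(* Defs.v *)
From HB Require Import structures.
From mathcomp Require Import all_boot all_order all_algebra.
From mathcomp Require Import reals.
Set Implicit Arguments. Unset Strict Implicit. Unset Printing Implicit Defensive.
Import Order.TTheory GRing.Theory Num.Theory.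
Local Open Scope ring_scope.

Section LieDefs.
Variables (R : realType) (L : vectType R) (br : L -> L -> L).

Definition is_lie_bracket : Prop :=
  [/\ (forall (a : R) (x y z : L), br (a *: x + y) z = a *: br x z + br y z),
      (forall (a : R) (x y z : L), br z (a *: x + y) = a *: br z x + br z y),
      (forall x : L, br x x = 0) &
      (forall x y z : L, br x (br y z) + br y (br z x) + br z (br x y) = 0)].

Fixpoint nest (w : seq L) : L :=
  match w with
  | [::] => 0
  | [:: a] => a
  | a :: w' => br a (nest w')
  end.

Definition nilpotent_step (s : nat) : Prop :=
  forall w : seq L, size w = s.+1 -> nest w = 0.

(* Dynkin's form of the Baker-Campbell-Hausdorff series, truncated at
   degree s (exact when the Lie algebra is nilpotent of step <= s). *)
Definition bch (s : nat) (x y : L) : L :=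
  \sum_(1 <= n < s.+1)
    \sum_(t : {ffun 'I_n -> 'I_s.+1 * 'I_s.+1} |
            [forall i, 0 < ((t i).1 : nat) + (t i).2]%N)
      ((((-1) ^+ n.-1) / n%:R)
        / ((\sum_i (((t i).1 : nat) + (t i).2))%N%:R
           * (\prod_i (((t i).1)`! * ((t i).2)`!))%N%:R)) *:
      nest (flatten [seq nseq (t i).1 x ++ nseq (t i).2 y | i <- enum 'I_n]).

Definition lie_center (x : L) : Prop := forall y : L, br x y = 0.

End LieDefs.

Section GroupDefs.
Variables (N : Type) (mul : N -> N -> N) (one : N) (inv : N -> N).

Definition is_group : Prop :=
  [/\ (forall a b c, mul a (mul b c) = mul (mul a b) c),
      (forall a, mul one a = a), (forall a, mul a one = a),
      (forall a, mul (inv a) a = one) & (forall a, mul a (inv a) = one)].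

Definition group_center (g : N) : Prop := forall h : N, mul g h = mul h g.

Definition is_group_automorphism (F : N -> N) : Prop :=
  (forall a b, F (mul a b) = mul (F a) (F b)) /\ bijective F.

End GroupDefs.

(* Main.v *)
Require Import Defs.
From HB Require Import structures.
From mathcomp Require Import all_boot all_order all_algebra.
From mathcomp Require Import reals.
From mathcomp Require Import zify.
Import GRing.Theory Num.Theory.
Local Open Scope ring_scope.
Set Implicit Arguments. Unset Strict Implicit. Unset Printing Implicit Defensive.

Section Lie.
Variables (R : realType) (L : vectType R) (br : L -> L -> L) (s : nat).
Hypothesis Hlie : is_lie_bracket br.

Lemma brDl a b z : br (a + b) z = br a z + br b z.
Proof. by have [H _ _ _] := Hlie; have := H 1 a b z; rewrite !scale1r. Qed.
Lemma brDr a b z : br z (a + b) = br z a + br z b.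
Proof. by have [_ H _ _] := Hlie; have := H 1 a b z; rewrite !scale1r. Qed.
Lemma br0l z : br 0 z = 0.
Proof. by apply/(addrI (br 0 z)); rewrite -brDl !addr0. Qed.
Lemma br0r z : br z 0 = 0.
Proof. by apply/(addrI (br z 0)); rewrite -brDr !addr0. Qed.
Lemma brZl (c : R) a z : br (c *: a) z = c *: br a z.
Proof. by have [H _ _ _] := Hlie; have := H c a 0 z; rewrite !addr0 br0l addr0. Qed.
Lemma brZr (c : R) a z : br z (c *: a) = c *: br z a.
Proof. by have [_ H _ _] := Hlie; have := H c a 0 z; rewrite !addr0 br0r addr0. Qed.
Lemma brxx x : br x x = 0.
Proof. by have [_ _ H _] := Hlie. Qed.
Lemma brC x y : br y x = - br x y.
Proof.
apply/eqP; rewrite -addr_eq0 addrC; apply/eqP.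
by have := brxx (x + y); rewrite brDl !brDr !brxx add0r addr0.
Qed.

Lemma nest_cons a w : w != [::] -> nest br (a :: w) = br a (nest br w).
Proof. by case: w. Qed.

Lemma nest_rcons p v : nest br (rcons p v) = foldr br v p.
Proof.
elim: p => [//|a p IH] /=; rewrite -IH.
by case: p {IH}.
Qed.

Lemma foldr_brD p u v : foldr br (u + v) p = foldr br u p + foldr br v p.
Proof. by elim: p => [//|a p IH] /=; rewrite IH brDr. Qed.
Lemma foldr_brZ p (c : R) v : foldr br (c *: v) p = c *: foldr br v p.
Proof. by elim: p => [//|a p IH] /=; rewrite IH brZr. Qed.
Lemma foldr_br0 p : foldr br 0 p = 0.
Proof. by elim: p => [//|a p IH] /=; rewrite IH br0r. Qed.

Inductive lc : nat -> L -> Prop :=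
| lc0 v : lc 0 v
| lcN k : lc k 0
| lcB k a w : lc k w -> lc k.+1 (br a w)
| lcD k u v : lc k u -> lc k v -> lc k (u + v)
| lcZ k (c : R) v : lc k v -> lc k (c *: v).

Lemma lc_mono m v : lc m v -> forall k, (k <= m)%N -> lc k v.
Proof.
elim=> {m v}.
- by move=> v [|k] // _; apply: lc0.
- by move=> k v _; apply: lcN.
- move=> k a w _ IH [|j] Hj; first exact: lc0.
  by apply: lcB; apply: IH.
- by move=> k u v _ IHu _ IHv j Hj; apply: lcD; [apply: IHu|apply: IHv].
- by move=> k c v _ IH j Hj; apply: lcZ; apply: IH.
Qed.

Lemma lc_sum k (I : Type) (r : seq I) (P : pred I) (G : I -> L) :
  (forall i, P i -> lc k (G i)) -> lc k (\sum_(i <- r | P i) G i).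
Proof.
move=> H; apply: (big_ind (lc k)); [exact: lcN | exact: lcD | exact: H].
Qed.

Hypothesis Hnil : nilpotent_step br s.

Lemma lc_top k v : lc k v -> forall p, (size p + k = s)%N -> foldr br v p = 0.
Proof.
elim=> {k v}.
- by move=> v p Hp; rewrite -nest_rcons; apply: Hnil; rewrite size_rcons addn0 in Hp *; rewrite Hp.
- by move=> k p _; rewrite foldr_br0.
- move=> k a w _ IH p Hp; rewrite -foldr_rcons; apply: IH.
  by rewrite size_rcons addSnnS.
- by move=> k u v _ IHu _ IHv p Hp; rewrite foldr_brD IHu // IHv // addr0.
- by move=> k c v _ IH p Hp; rewrite foldr_brZ IH // scaler0.
Qed.

Lemma lc_s_eq0 v : lc s v -> v = 0.
Proof. by move=> H; have := lc_top H (p := [::]); apply. Qed.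

Lemma s0_eq0 : s = 0%N -> forall v : L, v = 0.
Proof. by move=> s0 v; have := @Hnil [:: v]; rewrite s0 /=; apply. Qed.

Definition inxy (x y : L) := [pred u : L | (u == x) || (u == y)].

Lemma br_cases (P : L -> Prop) x y a b : a \in inxy x y -> b \in inxy x y ->
  P 0 -> P (br x y) -> P (- br x y) -> P (br a b).
Proof.
rewrite /inxy !inE => /orP[]/eqP-> /orP[]/eqP-> H0 H1 H2; rewrite ?brxx //.
by rewrite brC.
Qed.

Lemma nest_lc k c y : lc k (br c y) -> forall w, all (inxy c y) w ->
  (2 <= size w)%N -> lc (k + size w - 2) (nest br w).
Proof.
move=> Hk; elim=> [//|a [//|b w'] IH] /= /andP[Ha Hw] _.
case: w' IH Hw => [|d w''] IH Hw.
  rewrite addnK.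
  move: Hw => /andP[Hb _].
  apply: (br_cases (P := lc k) Ha Hb); [exact: lcN | exact: Hk |].
  by rewrite -scaleN1r; apply: lcZ.
have -> : (k + (size w'').+3 - 2 = (k + (size w'').+2 - 2).+1)%N by lia.
by apply: lcB; apply: IH.
Qed.

Lemma nest_van x y : br x y = 0 -> forall w, all (inxy x y) w ->
  (2 <= size w)%N -> nest br w = 0.
Proof.
move=> H0; elim=> [//|a [//|b w'] IH] /= /andP[Ha Hw] _.
case: w' IH Hw => [|d w''] IH Hw.
  move: Hw => /andP[Hb _].
  by apply: (br_cases (P := fun v => v = 0) Ha Hb); rewrite // H0 oppr0.
by move: IH => /= -> //; rewrite br0r.
Qed.

Definition Tn n := {ffun 'I_n -> 'I_s.+1 * 'I_s.+1}.
Definition Pt n (t : Tn n) : bool := [forall i, 0 < ((t i).1 : nat) + (t i).2]%N.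
Definition degT n (t : Tn n) : nat := (\sum_i (((t i).1 : nat) + (t i).2))%N.
Definition coefT n (t : Tn n) : R :=
  (((-1) ^+ n.-1) / n%:R) / ((degT t)%:R * (\prod_i (((t i).1)`! * ((t i).2)`!))%N%:R).
Definition wordT (x y : L) n (t : Tn n) :=
  flatten [seq nseq (t i).1 x ++ nseq (t i).2 y | i <- enum 'I_n].
Definition termT x y n (t : Tn n) := coefT t *: nest br (wordT x y t).

Lemma bchE x y : bch br s x y = \sum_(1 <= n < s.+1) \sum_(t : Tn n | Pt t) termT x y t.
Proof. by []. Qed.

Lemma size_word x y n (t : Tn n) : size (wordT x y t) = degT t.
Proof.
rewrite /wordT size_flatten /shape -map_comp sumnE big_map big_enum /=.
by apply: eq_bigr => i _; rewrite /= size_cat !size_nseq.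
Qed.

Lemma all_word x y n (t : Tn n) : all (inxy x y) (wordT x y t).
Proof.
apply/allP => u /flattenP[w /mapP[i _ ->]].
rewrite mem_cat => /orP[] /nseqP[-> _]; by rewrite /inxy !inE eqxx ?orbT.
Qed.

Lemma degT_ge n (t : Tn n) : Pt t -> (n <= degT t)%N.
Proof.
move=> /forallP H; rewrite /degT -[X in (X <= _)%N]card_ord -sum1_card.
by apply: leq_sum => i _; apply: H.
Qed.

Lemma inner_split n (G : Tn n -> L) : (0 < n)%N ->
  \sum_(t | Pt t) G t = \sum_(t | Pt t && (degT t == 1%N)) G t
    + \sum_(t | Pt t && (degT t == 2%N)) G t + \sum_(t | Pt t && (3 <= degT t)%N) G t.
Proof.
move=> n0.
rewrite (bigID (fun t => degT t == 1%N)) /= -addrA; congr (_ + _).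
rewrite (bigID (fun t => degT t == 2%N)) /=; congr (_ + _); apply: eq_bigl => t.
  by case: (Pt t) => //=; case: (degT t) => [|[|[|d]]].
case Ht: (Pt t) => //=; have := degT_ge Ht.
by case: (degT t) => [|[|[|d]]] //= h; exfalso; lia.
Qed.

Section One.
Hypothesis s0 : (0 < s)%N.
Let i0 : 'I_s.+1 := ord0.
Let i1 : 'I_s.+1 := Ordinal (s0 : (1 < s.+1)%N).

Lemma coef1 (t : Tn 1) a b : t = [ffun => (a, b)] -> coefT t = ((a + b)%N%:R * (a`! * b`!)%N%:R)^-1.
Proof.
move=> ->; rewrite /coefT /degT !big_ord1 !ffunE /= expr0 divr1 mul1r //.
Qed.

Lemma word1 x y (t : Tn 1) a b : t = [ffun => (a, b)] -> wordT x y t = nseq a x ++ nseq b y.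
Proof.
by move=> ->; rewrite /wordT enum_ordSl enum_ord0 /= ffunE cats0.
Qed.

Lemma T1E (t : Tn 1) : t = [ffun => ((t ord0).1, (t ord0).2)].
Proof. by apply/ffunP => i; rewrite ffunE (ord1 i); case: (t ord0). Qed.

Lemma degT1 (t : Tn 1) : degT t = ((t ord0).1 + (t ord0).2)%N.
Proof. by rewrite /degT big_ord1. Qed.

Lemma Pt1 (t : Tn 1) : Pt t = (0 < (t ord0).1 + (t ord0).2)%N.
Proof.
apply/forallP/idP => [|H i]; first by apply.
by rewrite (ord1 i).
Qed.

End One.

Section One'.
Hypothesis s0 : (0 < s)%N.
Let i0 : 'I_s.+1 := ord0.
Let i1 : 'I_s.+1 := Ordinal (s0 : (1 < s.+1)%N).

Lemma S1 x y : \sum_(1 <= n < s.+1) \sum_(t : Tn n | Pt t && (degT t == 1%N)) termT x y t = x + y.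
Proof.
rewrite big_ltn // [X in _ + X]big_nat [X in _ + X]big1 ?addr0; last first.
  move=> n /= /andP[n2 _]; rewrite big1 // => t.
  move=> /andP[Ht /eqP Hd]; have := degT_ge Ht; lia.
rewrite (bigD1 [ffun => (i1, i0)]) /=; last by rewrite Pt1 degT1 !ffunE.
rewrite (bigD1 [ffun => (i0, i1)]) /=; last first.
  rewrite Pt1 degT1 !ffunE /=; apply/eqP => /ffunP/(_ ord0); rewrite !ffunE.
  by move=> -[].
rewrite [X in _ + (_ + X)]big1 ?addr0; last first.
  move=> t /andP[/andP[/andP[_ Hd] H1] H2]; exfalso.
  case E: (t ord0) => [p q]; have Et : t = [ffun => (p, q)] by rewrite (T1E t) E.
  rewrite degT1 E in Hd; rewrite Et in H1 H2.
  case: p q Hd H1 H2 {E Et} => [[|[|p]] Hp] [[|[|q]] Hq] //= _ H1 H2.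
    by move/eqP: H2; apply; apply/ffunP => i; rewrite !ffunE; congr pair; apply: val_inj.
  by move/eqP: H1; apply; apply/ffunP => i; rewrite !ffunE; congr pair; apply: val_inj.
rewrite /termT (coef1 (a := i1) (b := i0) erefl) (word1 _ _ (a := i1) (b := i0) erefl).
rewrite (coef1 (a := i0) (b := i1) erefl) (word1 _ _ (a := i0) (b := i1) erefl) /=.
have E1 : (1`! * 0`!)%N = 1%N by [].
have E2 : (0`! * 1`!)%N = 1%N by [].
by rewrite !E1 addn0 add0n mulr1 invr1 !scale1r.
Qed.
End One'.

Section Two.
Let j0 : 'I_2 := ord0.
Let j1 : 'I_2 := ord_max.

Lemma I2 (i : 'I_2) : i = j0 \/ i = j1.
Proof. by case: i => [[|[|k]] Hi]; [left|right|]; try apply: val_inj. Qed.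

Lemma sum2 (G : 'I_2 -> nat) : (\sum_i G i = G j0 + G j1)%N.
Proof.
rewrite big_ord_recl big_ord1; congr (_ + G _)%N; exact: val_inj.
Qed.

Lemma prod2 (G : 'I_2 -> nat) : (\prod_i G i = G j0 * G j1)%N.
Proof.
rewrite big_ord_recl big_ord1; congr (_ * G _)%N; exact: val_inj.
Qed.

Lemma enum2 : enum 'I_2 = [:: j0; j1].
Proof.
rewrite enum_ordSl enum_ordSl enum_ord0 /=; congr [:: _; _]; exact: val_inj.
Qed.

Lemma Pt2 (t : Tn 2) : Pt t = (0 < (t j0).1 + (t j0).2)%N && (0 < (t j1).1 + (t j1).2)%N.
Proof.
apply/forallP/andP => [H|[H0 H1] i]; first by split; apply: H.
by case: (I2 i) => ->.
Qed.

Definition sw (t : Tn 2) : Tn 2 := [ffun i => t (rev_ord i)].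

Lemma rev_j0 : rev_ord j0 = j1. Proof. exact: val_inj. Qed.
Lemma rev_j1 : rev_ord j1 = j0. Proof. exact: val_inj. Qed.

Lemma swK : involutive sw.
Proof. by move=> t; apply/ffunP => i; rewrite !ffunE rev_ordK. Qed.

Lemma sw0 t : sw t j0 = t j1. Proof. by rewrite ffunE rev_j0. Qed.
Lemma sw1 t : sw t j1 = t j0. Proof. by rewrite ffunE rev_j1. Qed.

Lemma degT2 (t : Tn 2) : degT t = ((t j0).1 + (t j0).2 + ((t j1).1 + (t j1).2))%N.
Proof. by rewrite /degT sum2. Qed.

Lemma coef_sw t : coefT (sw t) = coefT t.
Proof.
rewrite /coefT !degT2 !prod2 !sw0 !sw1; congr (_ / (_%:R * _%:R)).
  by rewrite addnC.
by rewrite mulnC.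
Qed.

Lemma word2 x y (t : Tn 2) :
  wordT x y t = (nseq (t j0).1 x ++ nseq (t j0).2 y) ++ (nseq (t j1).1 x ++ nseq (t j1).2 y).
Proof. by rewrite /wordT enum2 /= cats0. Qed.

Lemma blk1 (x y : L) (a b : nat) : (a + b = 1)%N -> exists u, nseq a x ++ nseq b y = [:: u].
Proof. by case: a b => [|[|a]] [|[|b]] //= _; eexists. Qed.

Lemma F2 x y : \sum_(t : Tn 2 | Pt t && (degT t == 2%N)) termT x y t = 0.
Proof.
set S := (X in X = 0).
have HS : S = - S.
  rewrite {1}/S (reindex_inj (can_inj swK)) /= -sumrN.
  apply: eq_big => t.
    by rewrite !Pt2 !degT2 !sw0 !sw1; congr (_ && _); [exact: andbC | rewrite addnC].
  rewrite Pt2 degT2 !sw0 !sw1 => /andP[/andP[H0 H1] /eqP Hd].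
  rewrite /termT coef_sw -scalerN; congr (_ *: _).
  rewrite !word2 !sw0 !sw1.
  have E0 : ((t j0).1 + (t j0).2 = 1)%N by lia.
  have E1 : ((t j1).1 + (t j1).2 = 1)%N by lia.
  have [u0 ->] := blk1 x y E0; have [u1 ->] := blk1 x y E1.
  by rewrite /= brC.
have : (2%:R : R) *: S = 0 by rewrite scaler_nat mulr2n {1}HS addNr.
by move/eqP; rewrite scaler_eq0 pnatr_eq0 /= => /eqP.
Qed.

End Two.

Section Three.
Hypothesis s0 : (0 < s)%N.
Let i1 : 'I_s.+1 := Ordinal (s0 : (1 < s.+1)%N).

Lemma S2 x y : \sum_(1 <= n < s.+1) \sum_(t : Tn n | Pt t && (degT t == 2%N)) termT x y t
  = 2^-1 *: br x y.
Proof.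
rewrite big_ltn // [X in _ + X]big_nat [X in _ + X]big1 ?addr0; last first.
  move=> n /= /andP[n2 _]; have [->|n3] := eqVneq n 2; first exact: F2.
  rewrite big1 // => t /andP[Ht /eqP Hd]; have := degT_ge Ht; move/eqP: n3; lia.
rewrite (bigD1 [ffun => (i1, i1)]) /=; last by rewrite Pt1 degT1 !ffunE.
rewrite [X in _ + X]big1 ?addr0; last first.
  move=> t /andP[/andP[_ Hd] H1].
  case E: (t ord0) => [p q]; have Et : t = [ffun => (p, q)] by rewrite (T1E t) E.
  rewrite degT1 E in Hd; rewrite Et in H1; rewrite /termT (word1 _ _ Et).
  case: p q Hd H1 {E Et} => [[|[|[|p]]] Hp] [[|[|[|q]]] Hq] //= _ H1;
    try by rewrite brxx scaler0.
  by move/eqP: H1; case; apply/ffunP => i; rewrite !ffunE; congr pair; apply: val_inj.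
rewrite /termT (coef1 (a := i1) (b := i1) erefl) (word1 _ _ (a := i1) (b := i1) erefl) /=.
have E1 : (1`! * 1`!)%N = 1%N by [].
by rewrite E1 mulr1.
Qed.

End Three.

Definition S3 x y := \sum_(1 <= n < s.+1) \sum_(t : Tn n | Pt t && (3 <= degT t)%N) termT x y t.

Lemma bch_split x y : (0 < s)%N -> bch br s x y = x + y + 2^-1 *: br x y + S3 x y.
Proof.
move=> s0; rewrite bchE.
rewrite (eq_big_nat _ _ (F2 := fun n => 
   \sum_(t : Tn n | Pt t && (degT t == 1%N)) termT x y t
    + \sum_(t : Tn n | Pt t && (degT t == 2%N)) termT x y t
    + \sum_(t : Tn n | Pt t && (3 <= degT t)%N) termT x y t)); last first.
  by move=> n /andP[n1 _]; apply: inner_split.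
by rewrite !big_split /= S1 // S2.
Qed.

Lemma zmod_aux (V : zmodType) (a b h A B : V) :
  a + b + h + A = b + a + - h + B -> h + h = B - A.
Proof.
rewrite [b + a]addrC -!addrA => /addrI/addrI E'.
by apply/eqP; rewrite eq_sym subr_eq -addrA E' addNKr.
Qed.

Lemma bchA x c : br x c = 0 -> bch br s x c = x + c.
Proof.
move=> H; have [s0|s0] := posnP s.
  by rewrite (s0_eq0 s0 (bch _ _ _ _)) (s0_eq0 s0 x) (s0_eq0 s0 c) addr0.
rewrite bch_split // H scaler0 addr0 /S3 big1 ?addr0 // => n _.
rewrite big1 // => t /andP[_ Hd]; rewrite /termT (nest_van H) ?scaler0 ?all_word //.
by rewrite size_word; lia.
Qed.

Lemma bchB c : (forall y, bch br s c y = bch br s y c) -> forall y, br c y = 0.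
Proof.
move=> Hc y; have [s0|s0] := posnP s; first exact: s0_eq0.
suff H : forall k y, lc k (br c y) by apply: lc_s_eq0; apply: H.
elim=> [|k IH] y'; first exact: lc0.
case: k IH => [|k] IH; first by apply: lcB; apply: lc0.
have E := Hc y'; rewrite !bch_split // (brC c y') scalerN in E.
have HS : forall a b, (a = c /\ b = y') \/ (a = y' /\ b = c) -> lc k.+2 (S3 a b).
  move=> a b Hab; apply: lc_sum => n _; apply: lc_sum => t /andP[_ Hd]; apply: lcZ.
  have Hw : all (inxy c y') (wordT a b t).
    case: Hab => [[-> ->]|[-> ->]]; first exact: all_word.
    by apply: sub_all (all_word _ _ _) => u; rewrite /inxy !inE orbC.
  have Hs : (2 <= size (wordT a b t))%N by rewrite size_word; lia.
  apply: (lc_mono (nest_lc (IH y') Hw Hs)); rewrite size_word; lia.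
have half : (2^-1 + 2^-1 : R) = 1.
  by rewrite -div1r -mulrDl -mulr2n divff // pnatr_eq0.
rewrite -[br c y']scale1r -half scalerDl (zmod_aux E).
by apply: lcD; [apply: HS; right | rewrite -scaleN1r; apply: lcZ; apply: HS; left].
Qed.

End Lie.

Theorem proposition2p4
  (R : realType) (L : vectType R) (br : L -> L -> L) (s : nat)
  (Hlie : is_lie_bracket br) (Hnil : nilpotent_step br s)
  (N : Type) (mul : N -> N -> N) (one : N) (inv : N -> N)
  (HN : is_group mul one inv)
  (exp : L -> N) (log : N -> L)
  (Hexplog : cancel exp log) (Hlogexp : cancel log exp)
  (Hbch : forall x y : L, mul (exp x) (exp y) = exp (bch br s x y))
  (F : N -> N) (HF : is_group_automorphism mul F) :
  let f := fun x : L => log (F (exp x)) in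
  (forall g : N, group_center mul (mul (inv g) (F g))) <->
  (forall x : L, lie_center br (f x - x)).
Proof.
move=> f; have [Hass H1g Hg1 Hinvl Hinvr] := HN.
have expI : injective exp := can_inj Hexplog.
have centr : forall c, lie_center br c -> forall x, bch br s x c = x + c /\ bch br s c x = c + x.
  move=> c Hc x; split; apply: (bchA Hlie Hnil); first by rewrite brC // Hc oppr0.
  exact: Hc.
split.
- move=> Hc x.
  set g := exp x; set h := mul (inv g) (F g); set c := log h.
  have Hexpc : exp c = h by rewrite /c Hlogexp.
  have Fg : F g = mul g h by rewrite /h Hass Hinvr H1g.
  have cc : lie_center br c.
    move=> y; apply: (bchB Hlie Hnil) => y'; apply: expI.
    by rewrite -!Hbch Hexpc; apply: Hc.
  have -> : f x = x + c.
    by rewrite /f -/g Fg -Hexpc Hbch Hexplog; case: (centr c cc x).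
  by rewrite (addrC x c) addrK.
- move=> Hc g.
  set x := log g; set c := f x - x.
  have cc := Hc x.
  have Fg : F g = mul g (exp c).
    rewrite -{2}(Hlogexp g) -/x Hbch; case: (centr c cc x) => -> _.
    by rewrite /c addrC subrK /f Hlogexp /x Hlogexp.
  rewrite Fg Hass Hinvl H1g => h'.
  rewrite -(Hlogexp h') !Hbch; case: (centr c cc (log h')) => -> ->.
  by rewrite addrC.
Qed.
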